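(* Consider the general load coupling model with JT described in the context. Let $\bm\kappa,\bm\kappa'\in\{0,1\}^{n\times m}$ be JT patterns such that, for some cell $i$ and UE $j$, $\kappa_{ij}=0$, $\kappa'_{ij}=1$, and $\kappa'_{hl}=\kappa_{hl}$ for all $(h,l)\neq(i,j)$. Then for all $\bm{x}\in\mathbb{R}^n_{\ge 0}$, componentwise, $\bm{f}^{\bm\kappa}\big(\bm{h}^{\bm{\kappa'}}(\bm{x})\big)\leq\min\left\{\bm{f}^{\bm\kappa}\big(\bm{h}^{\bm\kappa}(\bm{x})\big),\ \bm{f}^{\bm{\kappa'}}\big(\bm{h}^{\bm{\kappa'}}(\bm{x})\big)\right\}$.
   Context: There are $n$ cells and $m$ UEs. Cell $i$ has transmit power per resource block $p_i>0$, $g_{ij}>0$ is the channel gain between cell $i$ and UE $j$, $d_j>0$ is the (normalized) bitrate demand of UE $j$, and $\sigma^2>0$ is the noise power. A JT pattern is a matrix $\bm\kappa\in\{0,1\}^{n\times m}$, where $\kappa_{ij}=1$ means cell $i$ serves UE $j$; every UE is assumed to be served by at least one cell. For a pattern $\bm\kappa$, the cell load function $\bm f^{\bm\kappa}=(f^{\bm\kappa}_1,\dots,f^{\bm\kappa}_n)$ and SINR function $\bm h^{\bm\kappa}=(h^{\bm\kappa}_1,\dots,h^{\bm\kappa}_m)$ are $f_i^{\bm{\kappa}}(\bm{\gamma})=\sum_{j=1}^{m}\frac{\kappa_{ij}d_j}{\log_2\left(1+\gamma_j\right)}$, $\quad h_j^{\bm{\kappa}}(\bm{x})=\frac{\sum_{i=1}^{n}p_ig_{ij}\kappa_{ij}}{\sum_{k=1}^{n}p_kg_{kj}x_{k}(1-\kappa_{kj})+\sigma^2}$,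 for $\bm\gamma\in\mathbb{R}^m_{>0}$ and $\bm x\in\mathbb{R}^n_{\ge0}$. Inequalities and $\min$ between vectors are componentwise. *)

(* Defs.v *)
(* R : realType, cells 'I_n, UEs 'I_m. *)
From HB Require Import structures.
From mathcomp Require Import all_boot all_order all_algebra.
From mathcomp Require Import reals exp.
Set Implicit Arguments. Unset Strict Implicit. Unset Printing Implicit Defensive.
Import Order.TTheory GRing.Theory Num.Theory.
Local Open Scope ring_scope.

Definition log2 {R : realType} (x : R) : R := ln x / ln 2.

Definition load_f {R : realType} {n m : nat} (kappa : 'I_n -> 'I_m -> bool)
  (d : 'I_m -> R) (gamma : 'I_m -> R) (i : 'I_n) : R :=
  \sum_(j < m) ((kappa i j)%:R * d j) / log2 (1 + gamma j).

Definition sinr_h {R : realType} {n m : nat} (kappa : 'I_n -> 'I_m -> bool)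
  (p : 'I_n -> R) (g : 'I_n -> 'I_m -> R) (sigma2 : R)
  (x : 'I_n -> R) (j : 'I_m) : R :=
  (\sum_(i < n) p i * g i j * (kappa i j)%:R) /
  (\sum_(k < n) p k * g k j * x k * (1 - (kappa k j)%:R) + sigma2).

(* Main.v *)
Require Import Defs.
From HB Require Import structures.
From mathcomp Require Import all_boot all_order all_algebra.
From mathcomp Require Import reals exp.
Import Order.TTheory GRing.Theory Num.Theory.
Local Open Scope ring_scope.

Lemma log2_pos (R : realType) (a : R) : 0 < a -> 0 < log2 (1 + a).
Proof.
move=> a0; rewrite /log2 divr_gt0 //; apply: ln_gt0.
  by rewrite ltrDl.
by rewrite ltr1n.
Qed.

Lemma term_anti (R : realType) (c a b : R) : 0 <= c -> 0 < a -> a <= b ->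
  c / log2 (1 + b) <= c / log2 (1 + a).
Proof.
move=> c0 a0 ab; have b0 : 0 < b by apply: lt_le_trans ab.
apply: ler_wpM2l => //.
rewrite lef_pV2 ?posrE ?log2_pos // /log2 ler_pM2r ?invr_gt0 ?ln_gt0 ?ltr1n //.
rewrite ler_ln ?posrE ?ltr_pwDr ?lerD2l //.
Qed.

Lemma bool_ge0 (R : realType) (b : bool) : 0 <= (b%:R : R).
Proof. by case: b. Qed.

Lemma one_sub_bool_ge0 (R : realType) (b : bool) : 0 <= 1 - (b%:R : R).
Proof. by case: b; rewrite ?subrr ?subr0. Qed.

Theorem lemma3 (R : realType) (n m : nat)
  (p : 'I_n -> R) (g : 'I_n -> 'I_m -> R) (d : 'I_m -> R) (sigma2 : R)
  (kappa kappa' : 'I_n -> 'I_m -> bool) (i0 : 'I_n) (j0 : 'I_m)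
  (Hp : forall i, 0 < p i) (Hg : forall i j, 0 < g i j)
  (Hd : forall j, 0 < d j) (Hsigma : 0 < sigma2)
  (Hserved : forall j, exists i, kappa i j)
  (Hserved' : forall j, exists i, kappa' i j)
  (Hk0 : kappa i0 j0 = false) (Hk1 : kappa' i0 j0 = true)
  (Hsame : forall h l, (h, l) <> (i0, j0) -> kappa' h l = kappa h l)
  (x : 'I_n -> R) (Hx : forall k, 0 <= x k) :
  forall i : 'I_n,
    load_f kappa d (sinr_h kappa' p g sigma2 x) i
    <= Num.min (load_f kappa d (sinr_h kappa p g sigma2 x) i)
               (load_f kappa' d (sinr_h kappa' p g sigma2 x) i).
Proof.
have hpos : forall (k : 'I_n -> 'I_m -> bool) j, (exists i, k i j) ->
    0 < sinr_h k p g sigma2 x j.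
  move=> k j [i ki]; rewrite /sinr_h divr_gt0 //.
    rewrite (bigD1 i) //= ki mulr1 ltr_pwDl ?mulr_gt0 //.
    by apply: sumr_ge0 => l _; rewrite mulr_ge0 ?bool_ge0 // mulr_ge0 ?ltW.
  rewrite ltr_wpDl //; apply: sumr_ge0 => l _.
  by rewrite mulr_ge0 ?one_sub_bool_ge0 // mulr_ge0 // mulr_ge0 ?ltW.
have kle : forall h l, ((kappa h l)%:R : R) <= (kappa' h l)%:R.
  move=> h l; case: (eqVneq (h, l) (i0, j0)) => [[-> ->]|ne].
    by rewrite Hk0 Hk1.
  by rewrite Hsame //; apply/eqP.
move=> i; rewrite le_min; apply/andP; split; rewrite /load_f; apply: ler_sum => j _.
- case: (eqVneq j j0) => [->|ne].
    apply: term_anti; first by rewrite mulr_ge0 ?bool_ge0 ?ltW.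
      by apply: hpos.
    rewrite /sinr_h ler_pdivlMr; last first.
      rewrite ltr_wpDl //; apply: sumr_ge0 => l _.
      by rewrite mulr_ge0 ?one_sub_bool_ge0 // mulr_ge0 // mulr_ge0 ?ltW.
    rewrite mulrAC ler_pdivrMr; last first.
      rewrite ltr_wpDl //; apply: sumr_ge0 => l _.
      by rewrite mulr_ge0 ?one_sub_bool_ge0 // mulr_ge0 // mulr_ge0 ?ltW.
    apply: ler_pM.
    + by apply: sumr_ge0 => l _; rewrite mulr_ge0 ?bool_ge0 // mulr_ge0 ?ltW.
    + apply: addr_ge0; last exact: ltW.
      apply: sumr_ge0 => l _.
      by rewrite mulr_ge0 ?one_sub_bool_ge0 // mulr_ge0 // mulr_ge0 ?ltW.
    + apply: ler_sum => l _; apply: ler_wpM2l; last exact: kle.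
      by rewrite mulr_ge0 ?ltW.
    + rewrite lerD2r; apply: ler_sum => l _; apply: ler_wpM2l.
        by rewrite mulr_ge0 // mulr_ge0 ?ltW.
      by rewrite lerD2l lerN2.
  have -> : sinr_h kappa' p g sigma2 x j = sinr_h kappa p g sigma2 x j.
    rewrite /sinr_h; congr (_ / (_ + _)); apply: eq_bigr => l _;
      rewrite Hsame //; case=> _ E; by rewrite E eqxx in ne.
  by [].
- apply: ler_wpM2r.
    rewrite invr_ge0; apply: ltW; apply: log2_pos; exact: hpos.
  apply: ler_wpM2r; [exact: ltW | exact: kle].
Qed.
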